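(* Let $v\equiv 1$ or $7\pmod{24}$ with $v\ge 25$, let $n=\frac{v-1}{6}$, and let $p$ be an integer such that there exist two Skolem sequences of order $n$ with exactly $p$ pairs in common. Then for all integers $k,i,j$ with $0\le j\le p$, $0\le i\le p-j$ and $2p-2i-2j\le k\le 2n-2i-2j$, there exists a cyclic four-fold triple system CTS$(v,4)$ whose fine structure satisfies $(c_2,c_3,c_4)=(k,i,j)$.
   Context: A Skolem sequence of order $n$ is a sequence $(s_1,\ldots,s_{2n})$ in which each $k\in\{1,\ldots,n\}$ occurs exactly twice, at positions $a_k<b_k$ with $b_k-a_k=k$. Two Skolem sequences of order $n$ have exactly $p$ pairs in common if exactly $p$ values occupy the same two positions in both. A cyclic $\lambda$-fold triple system CTS$(v,\lambda)$ is a multiset of 3-element subsets of $\mathbb Z_v$ such that every 2-element subset is contained in exactly $\lambda$ blocks (with multiplicity), invariant under $x\mapsto x+1$; it is a union of translation orbits with multiplicities, a base block being an orbit representative. The fine structure is $(c_1,\ldots,c_\lambda)$, $c_i$ = number of distinct base blocks (orbits) occurring with multiplicity exactly $i$. *)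

(* Defs.v *)
From mathcomp Require Import all_boot all_order all_algebra.
Set Implicit Arguments. Unset Strict Implicit. Unset Printing Implicit Defensive.

(* A Skolem sequence of order n, written as a list s = [s_1; ...; s_2n]
   (0-based list positions). *)
Definition skolem_seq (n : nat) (s : seq nat) : Prop :=
  size s = 2 * n /\
  all (fun x => (0 < x) && (x <= n)) s /\
  (forall k, 1 <= k <= n ->
     count_mem k s = 2 /\ nth 0 s (index k s + k) = k).

(* Number of values k in {1..n} occupying the same two positions in s1 and s2
   (the pair of positions of k is (index k s, index k s + k)). *)
Definition common_pairs (n : nat) (s1 s2 : seq nat) : nat :=
  count (fun k => index k s1 == index k s2) (iota 1 n).

Definition translate (v : nat) (d : 'Z_v) (B : {set 'Z_v}) : {set 'Z_v} :=
  [set (x + d)%R | x in B].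

Definition is_CTS (v lambda : nat) (m : {set 'Z_v} -> nat) : Prop :=
  (forall B, 0 < m B -> #|B| = 3) /\
  (forall x y : 'Z_v, x != y ->
     \sum_(B : {set 'Z_v} | (x \in B) && (y \in B)) m B = lambda) /\
  (forall (d : 'Z_v) B, m (translate d B) = m B).

Definition orbit_of (v : nat) (B : {set 'Z_v}) : {set {set 'Z_v}} :=
  [set translate d B | d : 'Z_v].

Definition fine_c (v : nat) (m : {set 'Z_v} -> nat) (i : nat) : nat :=
  #|[set orbit_of B | B in [set B : {set 'Z_v} | m B == i]]|.

(* Main.v *)
Require Import Defs.
From mathcomp Require Import all_boot all_order all_algebra zify ring.
Import GRing.Theory.
Set Implicit Arguments. Unset Strict Implicit. Unset Printing Implicit Defensive.

Definition blk (u a c : nat) : {set 'Z_(u.+2)} := [set 0%R; (a%:R)%R; (c%:R)%R].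

Lemma valD u (x y : 'Z_(u.+2)) : (x + y)%R = (x + y) %% u.+2 :> nat.
Proof. by []. Qed.

Lemma valn u a : (a%:R : 'Z_(u.+2))%R = a %% u.+2 :> nat.
Proof. by rewrite val_Zp_nat. Qed.

Lemma modeq V x D y : x < V -> D < V -> y < V ->
  ((x + D) %% V == y) = (x + D == y) || (x + D == y + V).
Proof.
move=> hx hD hy.
case: (ltnP (x + D) V) => h.
  rewrite modn_small //; lia.
have -> : x + D = (x + D - V) + V by lia.
rewrite modnDr modn_small; lia.
Qed.

Lemma val0 u : (0%R : 'Z_(u.+2)) = 0 :> nat.
Proof. by []. Qed.

Lemma zeqE u (x y : 'Z_(u.+2)) : (x == y) = (nat_of_ord x == nat_of_ord y).
Proof. by []. Qed.

Lemma in3Z u (w x y z : 'Z_(u.+2)) : (w \in [set x; y; z]) = [|| nat_of_ord w == x, nat_of_ord w == y | nat_of_ord w == z].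
Proof. by rewrite !inE orbA. Qed.

Lemma modeq2 V x D y : x < V -> D < V -> y < V ->
  (y == (x + D) %% V) = (x + D == y) || (x + D == y + V).
Proof. by move=> *; rewrite eq_sym modeq. Qed.

Lemma tr3 u (d x y z : 'Z_(u.+2)) :
  translate d [set x; y; z] = [set (x + d)%R; (y + d)%R; (z + d)%R].
Proof. by rewrite /translate !imsetU !imset_set1. Qed.

Lemma in3 (T : finType) (w x y z : T) : (w \in [set x; y; z]) = [|| w == x, w == y | w == z].
Proof. by rewrite !inE orbA. Qed.

Lemma ak1 (V a1 c1 a2 c2 d : nat) : 0 < a1 < c1 -> 0 < a2 < c2 -> 2 * c1 < V -> 2*c2 < V -> d < V ->
  [|| 0 == d, (a1 + d == 0) || (a1 + d == 0 + V), c1 + d == 0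
    | c1 + d == 0 + V] ->
  [|| a2 == d, (a1 + d == a2) || (a1 + d == a2 + V), c1 + d == a2
    | c1 + d == a2 + V] ->
  [|| c2 == d, (a1 + d == c2) || (a1 + d == c2 + V), c1 + d == c2
    | c1 + d == c2 + V] -> d = 0.
Proof. move=> *. lia. Qed.
Lemma ak2 (V a1 c1 a2 c2 : nat) : 0 < a1 < c1 -> 0 < a2 < c2 -> 2 * c1 < V -> 2*c2 < V -> 
  [|| a2 == 0, (a1 + 0 == a2) || (a1 + 0 == a2 + V), c1 + 0 == a2
    | c1 + 0 == a2 + V] ->
  [|| c2 == 0, (a1 + 0 == c2) || (a1 + 0 == c2 + V), c1 + 0 == c2
    | c1 + 0 == c2 + V] -> 
  [|| (a1 + 0 == 0) || (a1 + 0 == 0 + V),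
      (a1 + 0 == a2) || (a1 + 0 == a2 + V), a1 + 0 == c2
    | a1 + 0 == c2 + V] ->
  [|| (c1 + 0 == 0) || (c1 + 0 == 0 + V),
      (c1 + 0 == a2) || (c1 + 0 == a2 + V), c1 + 0 == c2
    | c1 + 0 == c2 + V] -> a1 = a2 /\ c1 = c2.
Proof. move=> *. lia. Qed.

Lemma key u d a1 c1 a2 c2 : 0 < a1 < c1 -> 0 < a2 < c2 ->
  2 * c1 < u.+2 -> 2 * c2 < u.+2 ->
  translate d (blk u a1 c1) = blk u a2 c2 -> [/\ a1 = a2, c1 = c2 & d = 0%R].
Proof.
move=> h1 h2 h3 h4 E.
have hd : nat_of_ord d < u.+2 := ltn_ord d.
have M : forall z, z \in blk u a2 c2 -> z \in translate d (blk u a1 c1) by move=> z; rewrite E.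
have M' : forall z, z \in translate d (blk u a1 c1) -> z \in blk u a2 c2 by move=> z; rewrite E.
have H1 : (0%R : 'Z_(u.+2)) \in translate d (blk u a1 c1) by apply: M; rewrite /blk !inE eqxx ?orbT.
have H2 : (a2%:R)%R \in translate d (blk u a1 c1) by apply: M; rewrite /blk !inE eqxx ?orbT.
have H3 : (c2%:R)%R \in translate d (blk u a1 c1) by apply: M; rewrite /blk !inE eqxx ?orbT.
have H4 : (0 + d)%R \in blk u a2 c2 by apply: M'; apply: imset_f; rewrite /blk !inE eqxx ?orbT.
have H5 : (a1%:R + d)%R \in blk u a2 c2 by apply: M'; apply: imset_f; rewrite /blk !inE eqxx ?orbT.
have H6 : (c1%:R + d)%R \in blk u a2 c2 by apply: M'; apply: imset_f; rewrite /blk !inE eqxx ?orbT.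
move: H1 H2 H3 H4 H5 H6.
rewrite /blk tr3 !in3Z.
rewrite !(@valD u) !(@valn u) !(@val0 u).
have ma1 : a1 %% u.+2 = a1 by apply: modn_small; lia.
have mc1 : c1 %% u.+2 = c1 by apply: modn_small; lia.
have ma2 : a2 %% u.+2 = a2 by apply: modn_small; lia.
have mc2 : c2 %% u.+2 = c2 by apply: modn_small; lia.
have md : nat_of_ord d %% u.+2 = d by apply: modn_small; lia.
rewrite ma1 mc1 ma2 mc2 !add0n md.
clear E M M'.
rewrite !modeq ?modeq2; [idtac | lia ..].
move=> H1 H2 H3 H4 H5 H6.
have Hd := ak1 h1 h2 h3 h4 hd H1 H2 H3.
rewrite Hd in H2 H3 H5 H6.
have [-> ->] := ak2 h1 h2 h3 h4 H2 H3 H5 H6.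
split=> //; exact/val_inj.
Qed.








Lemma sum3 (T : finType) (x y z : T) (F : T -> nat) : x != y -> x != z -> y != z ->
  \sum_(t in [set x; y; z]) F t = F x + F y + F z.
Proof.
move=> xy xz yz.
have -> : [set x; y; z] = x |: (y |: [set z]) by rewrite setUA.
rewrite big_setU1 /=; last by rewrite !inE negb_or xy xz.
rewrite big_setU1 /=; last by rewrite !inE yz.
by rewrite big_set1 addnA.
Qed.
Lemma card3 (T : finType) (x y z : T) : x != y -> x != z -> y != z -> #|[set x; y; z]| = 3.
Proof.
move=> xy xz yz.
have -> : [set x; y; z] = x |: (y |: [set z]) by rewrite setUA.
by rewrite cardsU1 cardsU1 cards1 !inE negb_or xy xz yz.
Qed.

Lemma tr_add u (d e : 'Z_(u.+2)) X : translate e (translate d X) = translate (d + e)%R X.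
Proof.
rewrite /translate -imset_comp; apply: eq_imset => x /=; by rewrite addrA.
Qed.

Lemma tr0 u (X : {set 'Z_(u.+2)}) : translate 0%R X = X.
Proof.
rewrite /translate; apply/setP => z; apply/imsetP/idP => [[x xX ->]|zX].
  by rewrite addr0.
by exists z; rewrite ?addr0.
Qed.

Lemma tr_inj u (d : 'Z_(u.+2)) X Y : translate d X = translate d Y -> X = Y.
Proof.
move=> /(congr1 (translate (- d)%R)); by rewrite !tr_add subrr !tr0.
Qed.

Lemma mem_tr u (d z : 'Z_(u.+2)) X : (z \in translate d X) = (z - d \in X)%R.
Proof.
apply/imsetP/idP => [[x xX ->]|zX]; first by rewrite addrK.
by exists (z - d)%R; rewrite ?subrK.
Qed.

Lemma card_tr u (d : 'Z_(u.+2)) X : #|translate d X| = #|X|.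
Proof. by rewrite /translate card_imset //; apply: addIr. Qed.

Definition mfun u (T : finType) (a c w : T -> nat) (B : {set 'Z_(u.+2)}) : nat :=
  \sum_(e : T) w e * \sum_(d : 'Z_(u.+2)) (translate d (blk u (a e) (c e)) == B).

Lemma m_inv (u : nat) (T : finType) (a c w : T -> nat) (d0 : 'Z_(u.+2)) B :
  mfun a c w (translate d0 B) = mfun a c w B.
Proof.
rewrite /mfun; apply: eq_bigr => e _; congr (_ * _).
rewrite (reindex_inj (addIr d0)) /=; apply: eq_bigr => d _.
rewrite -tr_add; congr (nat_of_bool _).
apply/eqP/eqP => [|->//]; exact: tr_inj.
Qed.

Definition goodkey (V a c : nat) := (0 < a < c) && (2 * c < V).

Lemma blk_distinct (u : nat) a c : goodkey u.+2 a c ->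
  [/\ (0%R : 'Z_(u.+2)) != a%:R, (0%R : 'Z_(u.+2)) != c%:R & (a%:R : 'Z_(u.+2)) != c%:R]%R.
Proof.
move=> /andP [h1 h2].
rewrite -!val_eqE /= !val_Zp_nat // !(@modn_small a) ?(@modn_small c); [split; lia|lia..].
Qed.

Lemma card_blk (u : nat) a c : goodkey u.+2 a c -> #|blk u a c| = 3.
Proof. by move=> /blk_distinct [*]; apply: card3. Qed.

Lemma m_card (u : nat) (T : finType) (a c w : T -> nat) (B : {set 'Z_(u.+2)}) :
  (forall e, goodkey u.+2 (a e) (c e)) -> 0 < mfun a c w B -> #|B| = 3.
Proof.
move=> G; rewrite /mfun; case: (boolP [exists e, exists d, (0 < w e) && (translate d (blk u (a e) (c e)) == B)]).
  by move=> /existsP [e /existsP [d /andP [_ /eqP <-]]]; rewrite card_tr card_blk.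
move=> /negP H; rewrite big1 // => e _.
case: (posnP (w e)) => [->//|we].
rewrite big1 ?muln0 // => d _.
case: eqP => // E; exfalso; apply: H.
by apply/existsP; exists e; apply/existsP; exists d; rewrite we E eqxx.
Qed.

Definition Nsix (u a c : nat) (dl : 'Z_(u.+2)) : nat :=
  (dl == a%:R)%R + (dl == c%:R)%R + (dl == - a%:R)%R + (dl == c%:R - a%:R)%R
  + (dl == - c%:R)%R + (dl == a%:R - c%:R)%R.

Lemma mem3nat (T : finType) (w x y z : T) : x != y -> x != z -> y != z ->
  ((w \in [set x; y; z]) : nat) = (w == x) + (w == y) + (w == z).
Proof.
move=> xy xz yz; rewrite !inE.
case: (w =P x) => [->|_]; first by rewrite (negbTE xy) (negbTE xz).
case: (w =P y) => [->|_]; first by rewrite (negbTE yz).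
by case: (w =P z).
Qed.

Lemma eqadd u (dl A C : 'Z_(u.+2)) : (dl + A == C)%R = (dl == C - A)%R.
Proof. by rewrite eq_sym -subr_eq eq_sym. Qed.

Lemma lam_e (u : nat) a c (x y : 'Z_(u.+2)) : goodkey u.+2 a c -> x != y ->
  \sum_(d : 'Z_(u.+2)) ((x \in translate d (blk u a c)) && (y \in translate d (blk u a c)))
  = Nsix a c (y - x)%R.
Proof.
move=> G xy.
have [d0a d0c dac] := blk_distinct G.
under eq_bigr do rewrite !mem_tr.
rewrite (reindex_inj (can_inj (subKr x))) /=.
have E : forall d : 'Z_(u.+2), (y - (x - d) = (y - x) + d)%R.
  by move=> d; rewrite opprB addrA addrAC.
under eq_bigr do rewrite subKr E.
rewrite (_ : \sum_d _ = \sum_(d in blk u a c) (((y - x) + d)%R \in blk u a c)); last first.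
  by rewrite [RHS]big_mkcond; apply: eq_bigr => d _; case: (d \in blk u a c).
have hdl : (y - x != 0)%R by rewrite subr_eq0 eq_sym.
move: (y - x)%R hdl => dl hdl.
rewrite sum3 // !mem3nat // addr0 !addr_eq0 !eqadd !subrr (negbTE hdl) /Nsix.
rewrite !add0n !addn0 -!addnA; congr (_ + _); rewrite !addnA; congr (_ + _).
Qed.

Lemma sum_pred_eq (T : finType) (P : pred T) (Y : T) :
  \sum_(B | P B) ((Y == B) : nat) = P Y.
Proof.
rewrite big_mkcond (bigD1 Y) //= eqxx big1 ?addn0; first by case: (P Y).
by move=> B /negbTE; rewrite eq_sym => ->; case: (P B).
Qed.

Lemma lam (u : nat) (T : finType) (a c w : T -> nat) (x y : 'Z_(u.+2)) :
  (forall e, goodkey u.+2 (a e) (c e)) -> x != y ->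
  \sum_(B : {set 'Z_(u.+2)} | (x \in B) && (y \in B)) mfun a c w B =
  \sum_(e : T) w e * Nsix (a e) (c e) (y - x)%R.
Proof.
move=> G xy; rewrite /mfun exchange_big /=; apply: eq_bigr => e _.
rewrite -big_distrr /=; congr (_ * _).
rewrite exchange_big /=.
under eq_bigr do rewrite (@sum_pred_eq _ (fun B : {set 'Z_(u.+2)} => (x \in B) && (y \in B))).
exact: lam_e.
Qed.

Lemma trkey (u : nat) a1 c1 a2 c2 (d d0 : 'Z_(u.+2)) :
  goodkey u.+2 a1 c1 -> goodkey u.+2 a2 c2 ->
  translate d (blk u a1 c1) = translate d0 (blk u a2 c2) -> [/\ a1 = a2, c1 = c2 & d = d0].
Proof.
move=> /andP [g1 g2] /andP [g3 g4] /(congr1 (translate (- d0)%R)).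
rewrite !tr_add subrr tr0 => /key [] // -> -> /subr0_eq ->; done.
Qed.

Lemma cnt (u : nat) a1 c1 a2 c2 (d0 : 'Z_(u.+2)) :
  goodkey u.+2 a1 c1 -> goodkey u.+2 a2 c2 ->
  \sum_(d : 'Z_(u.+2)) (translate d (blk u a1 c1) == translate d0 (blk u a2 c2))
  = ((a1 == a2) && (c1 == c2)).
Proof.
move=> g1 g2.
case: (boolP ((a1 == a2) && (c1 == c2))) => [/andP [/eqP e1 /eqP e2]|H].
  rewrite -(sum_pred_eq predT d0) /=; apply: eq_bigr => d _.
  congr (nat_of_bool _).
  apply/eqP/eqP => [/(trkey g1 g2) [_ _ ->] //|->]; by rewrite e1 e2.
rewrite big1 // => d _; case: eqP => // /(trkey g1 g2) [e1 e2 _].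
by move: H; rewrite e1 e2 !eqxx.
Qed.

Section Fine.
Variables (u : nat) (T : finType) (a c w : T -> nat).
Hypothesis G : forall e, goodkey u.+2 (a e) (c e).
Hypothesis DK : forall e e', 0 < w e -> 0 < w e' -> a e = a e' -> c e = c e' -> e = e'.

Lemma m_at e (d0 : 'Z_(u.+2)) : 0 < w e -> mfun a c w (translate d0 (blk u (a e) (c e))) = w e.
Proof.
move=> we; rewrite /mfun (bigD1 e) //= cnt // !eqxx muln1 big1 ?addn0 // => e' ne'.
rewrite cnt //; case: (posnP (w e')) => [->//|pe'].
case: andP => [[/eqP h1 /eqP h2]|]; last by rewrite muln0.
by case/negP: ne'; apply/eqP; apply: DK.
Qed.

Lemma m_pos (B : {set 'Z_(u.+2)}) : 0 < mfun a c w B ->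
  exists e, exists d, 0 < w e /\ B = translate d (blk u (a e) (c e)).
Proof.
rewrite /mfun; case: (boolP [exists e, exists d, (0 < w e) && (translate d (blk u (a e) (c e)) == B)]).
  by move=> /existsP [e /existsP [d /andP [we /eqP <-]]] _; exists e, d.
move=> /negP H; rewrite big1 // => e _.
case: (posnP (w e)) => [->//|we].
rewrite big1 ?muln0 // => d _.
case: eqP => // E; exfalso; apply: H.
by apply/existsP; exists e; apply/existsP; exists d; rewrite we E eqxx.
Qed.

Lemma orbit_tr (d : 'Z_(u.+2)) X : orbit_of (translate d X) = orbit_of X.
Proof.
apply/setP => Z; apply/imsetP/imsetP => [[d' _ ->]|[d' _ ->]].
  by exists (d + d')%R; rewrite ?tr_add.
by exists (d' - d)%R => //; rewrite tr_add addrC subrK.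
Qed.

Lemma fine i : 0 < i -> fine_c (@mfun u T a c w) i = #|[set e | w e == i]|.
Proof.
move=> i0; rewrite /fine_c.
have -> : [set orbit_of B | B in [set B | @mfun u T a c w B == i]] =
          [set orbit_of (blk u (a e) (c e)) | e in [set e | w e == i]].
  apply/setP => Z; apply/imsetP/imsetP.
    move=> [B]; rewrite inE => /eqP mB ->.
    have [e [d [we EB]]] : exists e, exists d, 0 < w e /\ B = translate d (blk u (a e) (c e)).
      by apply: m_pos; rewrite mB.
    by exists e; [rewrite inE -mB EB m_at | rewrite EB orbit_tr].
  move=> [e]; rewrite inE => /eqP we ->.
  exists (blk u (a e) (c e)) => //.
  by rewrite inE -{1}(tr0 (blk u (a e) (c e))) m_at ?we.
rewrite card_in_imset // => e1 e2; rewrite !inE => /eqP w1 /eqP w2 E.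
have : blk u (a e1) (c e1) \in orbit_of (blk u (a e2) (c e2)).
  by rewrite -E; apply/imsetP; exists 0%R; rewrite ?tr0.
move/imsetP => [d _].
rewrite -{1}(tr0 (blk u (a e1) (c e1))) => /(trkey (G e1) (G e2)) [h1 h2 _].
by apply: DK; rewrite ?w1 ?w2.
Qed.
End Fine.

Lemma count_sum (T : eqType) (P : pred T) (x0 : T) (s : seq T) :
  count P s = \sum_(i < size s) P (nth x0 s i).
Proof.
elim: s => [|y s IH] /=; first by rewrite big_ord0.
by rewrite big_ord_recl IH.
Qed.

Lemma sum_eqi N i : \sum_(t < N) ((t : nat) == i) = (i < N).
Proof.
elim: N => [|N IH]; first by rewrite big_ord0.
rewrite big_ord_recr /= IH.
Time lia.
Qed.

Lemma sum_eqS N x : \sum_(t < N) ((t : nat).+1 == x) = (0 < x) && (x <= N).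
Proof.
elim: N => [|N IH]; first by rewrite big_ord0; lia.
rewrite big_ord_recr /= IH; lia.
Qed.

Lemma rank_count (P : pred nat) J N :
  \sum_(r < N) (P r && (\sum_(r' < r) P r' < J)) = minn J (\sum_(r < N) P r).
Proof.
elim: N => [|N IH]; first by rewrite !big_ord0 minn0.
rewrite !big_ord_recr /= IH.
case: (P N) => /=; last by rewrite !addn0.
set g := \sum_(i < N) P i.
case: (ltnP g J) => h /=; lia.
Qed.

Lemma count3 (x : nat) (s : seq nat) i j k :
  i < size s -> j < size s -> k < size s -> i != j -> i != k -> j != k ->
  nth 0 s i = x -> nth 0 s j = x -> nth 0 s k = x -> 3 <= count_mem x s.
Proof.
move=> hi hj hk ij ik jk ei ej ek.
rewrite (count_sum _ 0).
apply: (@leq_trans (\sum_(t < size s) (((t:nat) == i) + ((t:nat) == j) + ((t:nat) == k)))).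
  by rewrite !big_split /= !sum_eqi hi hj hk.
apply: leq_sum => t _.
move: (nat_of_ord t) => t'.
case: (t' =P i) => [->|ti]; first by rewrite (negbTE ij) (negbTE ik) /= ei eqxx.
case: (t' =P j) => [->|tj]; first by rewrite (negbTE jk) /= ej eqxx.
case: (t' =P k) => [->|tk]; first by rewrite /= ek eqxx.
by [].
Qed.

Lemma sk_mem n s r : skolem_seq n s -> 0 < r <= n -> r \in s.
Proof.
move=> [_ [_ H]] hr; have [c2 _] := H r hr.
by rewrite -has_pred1 has_count c2.
Qed.

Lemma sk_pos n s r : skolem_seq n s -> 0 < r <= n -> index r s + r < 2 * n.
Proof.
move=> S hr; have [sz [_ H]] := S; have [_ e] := H r hr.
rewrite -sz ltnNge; apply/negP => h.
by move: e; rewrite nth_default //; lia.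
Qed.

Lemma sk_cover n s q : skolem_seq n s -> q < 2 * n ->
  \sum_(r0 < n) ((index r0.+1 s == q) + (index r0.+1 s + r0.+1 == q)) = 1.
Proof.
move=> S hq; have [sz [al H]] := S.
set x := nth 0 s q.
have hx : 0 < x <= n.
  by move/allP: al => /(_ x); apply; rewrite mem_nth // sz.
rewrite -[RHS](_ : (0 < x) && (x <= n) = 1 :> nat); last by rewrite hx.
rewrite -sum_eqS; apply: eq_bigr => r0 _.
have hr : 0 < r0.+1 <= n by rewrite /= ltn_ord.
have [cnt e2] := H _ hr.
have ni : nth 0 s (index r0.+1 s) = r0.+1 by rewrite nth_index // (sk_mem S hr).
have hp := sk_pos S hr.
case: (r0.+1 =P x) => [ex|nx].
  case: (index r0.+1 s =P q) => [ea|na].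
    by rewrite ea; case: eqP => //; lia.
  case: (index r0.+1 s + r0.+1 =P q) => [//|nb].
  exfalso.
  have : 3 <= count_mem r0.+1 s.
    apply: (@count3 _ _ (index r0.+1 s) (index r0.+1 s + r0.+1) q); rewrite ?sz ?ni ?e2 //; try lia.
    all: try (apply/eqP; lia).
case: (index r0.+1 s =P q) => [ea|_].
  by case: nx; rewrite /x -ea ni.
case: (index r0.+1 s + r0.+1 =P q) => [eb|//].
by case: nx; rewrite /x -eb e2.
Qed.

Definition Msix (u r A B : nat) (dl : 'Z_(u.+2)) : nat :=
  (dl == r%:R)%R + (dl == - r%:R)%R + (dl == A%:R)%R + (dl == - A%:R)%R
  + (dl == B%:R)%R + (dl == - B%:R)%R.

Lemma Nsix_p (u r A : nat) (dl : 'Z_(u.+2)) :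
  Nsix r (A + r) dl = Msix r A (A + r) dl.
Proof.
rewrite /Nsix /Msix.
have -> : ((A + r)%:R - r%:R = A%:R :> 'Z_(u.+2))%R by rewrite natrD addrK.
have -> : (r%:R - (A + r)%:R = - A%:R :> 'Z_(u.+2))%R by rewrite natrD; ring.
lia.
Qed.

Lemma Nsix_m (u r A : nat) (dl : 'Z_(u.+2)) :
  Nsix A (A + r) dl = Msix r A (A + r) dl.
Proof.
rewrite /Nsix /Msix.
have -> : ((A + r)%:R - A%:R = r%:R :> 'Z_(u.+2))%R by rewrite natrD; ring.
have -> : (A%:R - (A + r)%:R = - r%:R :> 'Z_(u.+2))%R by rewrite natrD; ring.
lia.
Qed.

Definition qq (u n : nat) (dl : 'Z_(u.+2)) : nat :=
  if nat_of_ord dl <= 3 * n then nat_of_ord dl else u.+2 - nat_of_ord dl.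

Lemma pairv (u n e : nat) (dl : 'Z_(u.+2)) : u.+2 = 6 * n + 1 -> 0 < e <= 3 * n -> dl != 0%R ->
  (dl == e%:R)%R + (dl == - e%:R)%R = (qq n dl == e).
Proof.
move=> hv he hd.
have hd' : 0 < nat_of_ord dl by rewrite lt0n; apply: contra hd => /eqP h; apply/eqP/val_inj.
have hlt : nat_of_ord dl < u.+2 := ltn_ord dl.
have e1 : (dl == e%:R)%R = (nat_of_ord dl == e).
  by rewrite (zeqE dl) (@valn u) modn_small //; lia.
have e2 : (dl == - e%:R)%R = (nat_of_ord dl == u.+2 - e).
  rewrite (zeqE dl); congr (_ == _).
  have -> : nat_of_ord (- (e%:R : 'Z_(u.+2))%R)%R = (u.+2 - nat_of_ord (e%:R : 'Z_(u.+2))%R) %% u.+2 by [].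
  rewrite (@valn u) (@modn_small e) ?modn_small //; lia.
rewrite e1 e2 /qq.
move: (nat_of_ord dl) hd' hlt => x hx hx'.
case: ifP => h; lia.
Qed.

Lemma Msix_q (u n r A B : nat) (dl : 'Z_(u.+2)) : u.+2 = 6 * n + 1 -> dl != 0%R ->
  0 < r <= 3 * n -> 0 < A <= 3 * n -> 0 < B <= 3 * n ->
  Msix r A B dl = (qq n dl == r) + (qq n dl == A) + (qq n dl == B).
Proof.
move=> hv hd hr hA hB.
rewrite /Msix -!(pairv hv _ hd) //; lia.
Qed.

Lemma sumM n s q : skolem_seq n s -> 0 < q <= 3 * n ->
  \sum_(r0 < n) ((q == r0.+1) + (q == index r0.+1 s + n + 1) + (q == index r0.+1 s + n + 1 + r0.+1)) = 1.
Proof.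
move=> S hq.
under eq_bigr do rewrite -addnA.
rewrite big_split /=.
have -> : \sum_(r0 < n) (q == r0.+1) = (0 < q) && (q <= n).
  by rewrite -sum_eqS; apply: eq_bigr => r0 _; rewrite eq_sym.
case: (leqP q n) => h.
  rewrite big1 ?addn0; first lia.
  move=> r0 _; lia.
rewrite andbF add0n -[RHS](sk_cover S (q := q - n - 1)); last by lia.
apply: eq_bigr => r0 _; have := sk_pos S (r := r0.+1); rewrite /= ltn_ord => /(_ isT) hp.
lia.
Qed.

Lemma card_sum (T : finType) (P : pred T) : #|[set e | P e]| = \sum_e P e.
Proof.
rewrite -sum1_card big_mkcond /=; apply: eq_bigr => e _; rewrite inE.
by case: (P e).
Qed.

Lemma count_iota (P : pred nat) m N : count P (iota m N) = \sum_(r0 < N) P (m + r0).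
Proof.
elim: N m => [|N IH] m /=; first by rewrite big_ord0.
rewrite big_ord_recl IH addn0; congr (_ + _); apply: eq_bigr => r0 _.
by rewrite lift0 addSnnS.
Qed.

Lemma sum_compl (P : pred nat) N : \sum_(r0 < N) P r0 + \sum_(r0 < N) ~~ P r0 = N.
Proof.
rewrite -big_split /= (eq_bigr (fun _ => 1)); last by move=> r0 _; case: (P r0).
by rewrite sum1_card card_ord.
Qed.

Section Main.
Variables (u n : nat) (s1 s2 : seq nat) (i j J1 J2 : nat).
Hypothesis hv : u.+2 = 6 * n + 1.
Hypothesis S1 : skolem_seq n s1.
Hypothesis S2 : skolem_seq n s2.

Definition cm (r0 : nat) : bool := index r0.+1 s1 == index r0.+1 s2.
Definition rk (r0 : nat) : nat := \sum_(r' < r0) cm r'.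
Definition urk (r0 : nat) : nat := \sum_(r' < r0) ~~ cm r'.
Definition Wc r0 := if rk r0 < j then 4 else if rk r0 < i + j then 3 else 2.
Definition X1 r0 := if urk r0 < J1 then 2 else 1.
Definition X2 r0 := if urk r0 < J2 then 2 else 1.

Definition aN (r0 t : nat) : nat :=
  match t with 0 => r0.+1 | 1 => index r0.+1 s1 + n + 1 | 2 => r0.+1
  | _ => index r0.+1 s2 + n + 1 end.
Definition cN (r0 t : nat) : nat :=
  match t with 0 | 1 => index r0.+1 s1 + n + 1 + r0.+1
  | _ => index r0.+1 s2 + n + 1 + r0.+1 end.
Definition wN (r0 t : nat) : nat :=
  if cm r0 then match t with 0 => Wc r0 | 1 => 4 - Wc r0 | _ => 0 end
  else match t with 0 => X1 r0 | 1 => 2 - X1 r0 | 2 => X2 r0 | _ => 2 - X2 r0 end.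

Definition aE (e : 'I_n * 'I_4) := aN e.1 e.2.
Definition cE (e : 'I_n * 'I_4) := cN e.1 e.2.
Definition wE (e : 'I_n * 'I_4) := wN e.1 e.2.

Lemma goodN r0 t : r0 < n -> goodkey u.+2 (aN r0 t) (cN r0 t).
Proof.
move=> hr.
have hp1 := sk_pos S1 (r := r0.+1); have hp2 := sk_pos S2 (r := r0.+1).
have hr' : 0 < r0.+1 <= n by [].
move: (hp1 hr') (hp2 hr') => {hp1 hp2} hp1 hp2.
rewrite /goodkey /aN /cN.
case: t => [|[|[|t]]]; apply/andP; split; lia.
Qed.

Lemma goodE e : goodkey u.+2 (aE e) (cE e).
Proof. exact: goodN. Qed.

Lemma qq_range (dl : 'Z_(u.+2)) : dl != 0%R -> 0 < qq n dl <= 3 * n.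
Proof.
move=> hd.
have hd' : 0 < nat_of_ord dl by rewrite lt0n; apply: contra hd => /eqP h; apply/eqP/val_inj.
have hlt : nat_of_ord dl < u.+2 := ltn_ord dl.
rewrite /qq; move: (nat_of_ord dl) hd' hlt => x hx hx'.
case: ifP => h; lia.
Qed.

Lemma sumMs s (dl : 'Z_(u.+2)) : skolem_seq n s -> dl != 0%R ->
  \sum_(r0 < n) Msix r0.+1 (index r0.+1 s + n + 1) (index r0.+1 s + n + 1 + r0.+1) dl = 1.
Proof.
move=> S hd.
rewrite -[RHS](sumM S (qq_range hd)); apply: eq_bigr => r0 _.
have hr' : 0 < r0.+1 <= n by rewrite /= ltn_ord.
have hp := sk_pos S hr'.
rewrite (Msix_q hv hd) //; lia.
Qed.

Lemma lamN (dl : 'Z_(u.+2)) : dl != 0%R ->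
  \sum_(e : 'I_n * 'I_4) wE e * Nsix (aE e) (cE e) dl = 4.
Proof.
move=> hd.
rewrite /wE /aE /cE -(pair_bigA _ (fun (r0 : 'I_n) (t : 'I_4) => wN r0 t * Nsix (aN r0 t) (cN r0 t) dl)) /=.
rewrite (eq_bigr (fun r0 : 'I_n =>
   2 * Msix r0.+1 (index r0.+1 s1 + n + 1) (index r0.+1 s1 + n + 1 + r0.+1) dl +
   2 * Msix r0.+1 (index r0.+1 s2 + n + 1) (index r0.+1 s2 + n + 1 + r0.+1) dl)).
  by rewrite big_split /= -!big_distrr /= !sumMs.
move=> r0 _; rewrite !big_ord_recl big_ord0 /= /aE /cE /wE /= /aN /cN /bump /= ?addn0 ?add1n /=.
rewrite !Nsix_p !Nsix_m /wN.
case E: (cm r0).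
  move: E; rewrite /cm => /eqP ->.
  rewrite /Wc; case: ifP => _; [|case: ifP => _]; lia.
rewrite /X1 /X2; case: ifP => _; case: ifP => _; lia.
Qed.

Lemma cnt_w K : #|[set e : 'I_n * 'I_4 | wE e == K]| =
  \sum_(r0 < n) ((wN r0 0 == K) + (wN r0 1 == K) + (wN r0 2 == K) + (wN r0 3 == K)).
Proof.
rewrite card_sum /wE -(pair_bigA _ (fun (r0 : 'I_n) (t : 'I_4) => ((wN r0 t == K) : nat))) /=.
apply: eq_bigr => r0 _; rewrite !big_ord_recl big_ord0 /bump /= ?addn0 ?add1n /=.
by rewrite !addnA.
Qed.

Lemma c4 r0 : (wN r0 0 == 4) + (wN r0 1 == 4) + (wN r0 2 == 4) + (wN r0 3 == 4)
  = cm r0 && (rk r0 < j).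
Proof.
rewrite /wN /Wc /X1 /X2; case: (cm r0) => /=; repeat (case: ifP => ?); lia.
Qed.

Lemma c3 r0 : (wN r0 0 == 3) + (wN r0 1 == 3) + (wN r0 2 == 3) + (wN r0 3 == 3)
  + (cm r0 && (rk r0 < j)) = cm r0 && (rk r0 < i + j).
Proof.
rewrite /wN /Wc /X1 /X2; case: (cm r0) => /=; repeat (case: ifP => ?); lia.
Qed.

Lemma c2 r0 : (wN r0 0 == 2) + (wN r0 1 == 2) + (wN r0 2 == 2) + (wN r0 3 == 2)
  + 2 * (cm r0 && (rk r0 < i + j)) =
  2 * cm r0 + (~~ cm r0 && (urk r0 < J1)) + (~~ cm r0 && (urk r0 < J2)).
Proof.
rewrite /wN /Wc /X1 /X2; case: (cm r0) => /=; repeat (case: ifP => ?); lia.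
Qed.

Lemma sum_cm_rk X : \sum_(r0 < n) (cm r0 && (rk r0 < X)) = minn X (\sum_(r0 < n) cm r0).
Proof. exact: rank_count. Qed.

Lemma sum_ucm_rk X : \sum_(r0 < n) (~~ cm r0 && (urk r0 < X)) = minn X (\sum_(r0 < n) ~~ cm r0).
Proof. exact: (rank_count (fun r => ~~ cm r)). Qed.

Lemma cp_sum : common_pairs n s1 s2 = \sum_(r0 < n) cm r0.
Proof.
rewrite /common_pairs count_iota; apply: eq_bigr => r0 _; by rewrite add1n.
Qed.

Lemma DKN e e' : 0 < wE e -> 0 < wE e' -> aE e = aE e' -> cE e = cE e' -> e = e'.
Proof.
case: e => r0 t; case: e' => r0' t'; rewrite /wE /aE /cE /=.
move=> w1 w2 ea ec.
have rof : forall (r : 'I_n) (tt : 'I_4),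
    (aN r tt <= n /\ aN r tt = r.+1) \/ (n < aN r tt /\ cN r tt = aN r tt + r.+1).
  move=> r [tt htt]; have := ltn_ord r; rewrite /aN /cN /=; case: tt htt => [|[|[|tt]]] _; lia.
have er : nat_of_ord r0 = r0' by have := rof r0 t; have := rof r0' t'; lia.
have er' : r0 = r0' := val_inj er.
subst r0'.
have et : nat_of_ord t = t'.
  move: w1 w2 ea ec; case: t => [t ht]; case: t' => [t' ht'] /=.
  have := ltn_ord r0.
  rewrite /wN /aN /cN /cm.
  case: t ht => [|[|[|[|t]]]] ht //; case: t' ht' => [|[|[|[|t']]]] ht' //;
  case: eqP => E; lia.
by congr pair; apply: val_inj.
Qed.
End Main.

Unset Implicit Arguments.

Theorem mainTheorem14 (v p : nat) :
  (v %% 24 = 1 \/ v %% 24 = 7) -> 25 <= v ->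
  (exists s1 s2 : seq nat,
      skolem_seq ((v - 1) %/ 6) s1 /\ skolem_seq ((v - 1) %/ 6) s2 /\
      common_pairs ((v - 1) %/ 6) s1 s2 = p) ->
  forall k i j : nat,
    j <= p -> i + j <= p ->
    2 * p <= k + 2 * i + 2 * j ->
    k + 2 * i + 2 * j <= 2 * ((v - 1) %/ 6) ->
    exists m : {set 'Z_v} -> nat,
      is_CTS 4 m /\ fine_c m 2 = k /\ fine_c m 3 = i /\ fine_c m 4 = j.
Proof.
move=> hmod hv25 [s1 [s2 [S1 [S2 Hp]]]] k i j hj hij hk1 hk2.
have hv : v = 6 * ((v - 1) %/ 6) + 1 by lia.
move: ((v - 1) %/ 6) hv S1 S2 Hp hk2 => n hv S1 S2 Hp hk2.
case: v hv hmod hv25 => [|[|u]] hv hmod hv25; try lia.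
set kk := k + 2 * i + 2 * j - 2 * p.
set J1 := kk - kk %/ 2.
set J2 := kk %/ 2.
have G := goodE hv S1 S2.
have DK := @DKN u n s1 s2 i j J1 J2 hv.
exists (@mfun u _ (@aE n s1 s2) (@cE n s1 s2) (@wE n s1 s2 i j J1 J2)).
have Hp' := cp_sum n s1 s2; rewrite Hp in Hp'.
have Hc := sum_compl (cm s1 s2) n.
split; [split; [|split]|split; [|split]].
- by move=> B hB; apply: (m_card G hB).
- move=> x y xy; rewrite lam //; apply: lamN => //.
  by rewrite subr_eq0 eq_sym.
- by move=> d B; apply: m_inv.
- rewrite (fine G DK) // cnt_w.
  have E2 := big_split.
  have E : \sum_(r0 < n) ((wN s1 s2 i j J1 J2 r0 0 == 2) + (wN s1 s2 i j J1 J2 r0 1 == 2) +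
             (wN s1 s2 i j J1 J2 r0 2 == 2) + (wN s1 s2 i j J1 J2 r0 3 == 2)) +
           2 * \sum_(r0 < n) (cm s1 s2 r0 && (rk s1 s2 r0 < i + j)) =
           2 * \sum_(r0 < n) cm s1 s2 r0 + \sum_(r0 < n) (~~ cm s1 s2 r0 && (urk s1 s2 r0 < J1))
           + \sum_(r0 < n) (~~ cm s1 s2 r0 && (urk s1 s2 r0 < J2)).
    rewrite !big_distrr -!big_split; apply: eq_bigr => r0 _ /=.
    exact: (c2 _ _ _ _ _ _ hv).
  move: E; rewrite sum_cm_rk !sum_ucm_rk -Hp'.
  rewrite /J1 /J2 /kk; lia.
- rewrite (fine G DK) // cnt_w.
  have E : \sum_(r0 < n) ((wN s1 s2 i j J1 J2 r0 0 == 3) + (wN s1 s2 i j J1 J2 r0 1 == 3) +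
             (wN s1 s2 i j J1 J2 r0 2 == 3) + (wN s1 s2 i j J1 J2 r0 3 == 3)) +
           \sum_(r0 < n) (cm s1 s2 r0 && (rk s1 s2 r0 < j)) =
           \sum_(r0 < n) (cm s1 s2 r0 && (rk s1 s2 r0 < i + j)).
    rewrite -!big_split; apply: eq_bigr => r0 _ /=.
    exact: (c3 _ _ _ _ _ _ hv).
  move: E; rewrite !sum_cm_rk -Hp'; lia.
- rewrite (fine G DK) // cnt_w.
  have E : \sum_(r0 < n) ((wN s1 s2 i j J1 J2 r0 0 == 4) + (wN s1 s2 i j J1 J2 r0 1 == 4) +
             (wN s1 s2 i j J1 J2 r0 2 == 4) + (wN s1 s2 i j J1 J2 r0 3 == 4)) =
           \sum_(r0 < n) (cm s1 s2 r0 && (rk s1 s2 r0 < j)).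
    apply: eq_bigr => r0 _ /=; exact: (c4 _ _ _ _ _ _ hv).
  move: E; rewrite !sum_cm_rk -Hp'; lia.
Qed.
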